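(* Every binary Belov code (as defined in the context) is not self-orthogonal.
   Context: Let $S_k$ be the $k\times(2^k-1)$ binary matrix whose columns are all nonzero vectors of $\mathbb{F}_2^k$, and for an integer $s\ge1$ let $sS_k$ be the $k\times s(2^k-1)$ matrix consisting of $s$ copies of $S_k$ placed side by side. For a subspace $V$ of $\mathbb{F}_2^k$ write $V^*=V\setminus\{0\}$. A binary Belov code is defined as follows. Let $s\ge 1$, $t\ge 0$ and integers $u_1>u_2>\cdots>u_t>u\ge 3$ with $k>u_1$ (and $k\ge u+1$ if $t=0$). Let $V_1,\dots,V_t$ be subspaces of $\mathbb{F}_2^k$ with $\dim V_i=u_i$, let $W$ be a subspace of dimension $u+1$, and let $T\subseteq W^*$ be a set of $u+2$ vectors which spans a space of dimension $u+1$ and whose sum is $0$. Let $R$ be either empty or a single nonzero vector of $\mathbb{F}_2^k$. Let $G'$ be the matrix whose columns are the vectors of $V_1^*,\dots,V_t^*$, of $W^*\setminus T$, and of $R$ (listed with multiplicity), and suppose that every nonzero vector of $\mathbb{F}_2^k$ occurs at most $s$ times among the columns of $G'$, so that $G'$ can be regarded as a submatrix of $sS_k$. Let $G$ be the matrix obtained from $sS_k$ by deleting the columns of $G'$ (with multiplicity), and assume $G$ has rank $k$. The binary code generated by $G$ is called a Belov code. A binary code is self-orthogonal if $C\subseteq C^\perp$. *)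

(* Defs.v *)
From HB Require Import structures.
From mathcomp Require Import all_boot all_order all_algebra.
Set Implicit Arguments.
Unset Strict Implicit.
Unset Printing Implicit Defensive.
Import GRing.Theory.
Local Open Scope ring_scope.

(* Binary vectors of F_2^k are column vectors 'cV['F_2]_k; a binary linear
   code with generator matrix G : 'M['F_2]_(m, n) is the row space of G
   (a subspace of 'rV['F_2]_n). *)

Definition in_code (m n : nat) (G : 'M['F_2]_(m, n)) (x : 'rV['F_2]_n) : Prop :=
  (x <= G)%MS.

Definition in_dual_code (m n : nat) (G : 'M['F_2]_(m, n)) (y : 'rV['F_2]_n) : Prop :=
  forall x : 'rV['F_2]_n, in_code G x -> x *m y^T = 0.

Definition self_orthogonal (m n : nat) (G : 'M['F_2]_(m, n)) : Prop :=
  forall x : 'rV['F_2]_n, in_code G x -> in_dual_code G x.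

Definition col_mult (k n : nat) (G : 'M['F_2]_(k, n)) (v : 'cV['F_2]_k) : nat :=
  #|[set j : 'I_n | col j G == v]|.

(* multiplicity of v among the columns of G' (vectors of V_1^*,...,V_t^*,
   of W^* \ T and of R) *)
Definition belov_removed_mult (k t : nat) (V : 'I_t -> {vspace 'cV['F_2]_k})
    (W : {vspace 'cV['F_2]_k}) (T : {set 'cV['F_2]_k})
    (R : option 'cV['F_2]_k) (v : 'cV['F_2]_k) : nat :=
  (\sum_(i < t) nat_of_bool ((v \in V i) && (v != 0%R))
   + nat_of_bool ((v \in W) && (v != 0%R) && (v \notin T))
   + nat_of_bool (R == Some v))%N.

(* Main.v *)
Require Import Defs.
From HB Require Import structures.
From mathcomp Require Import all_boot all_order all_algebra.
From mathcomp Require Import zify.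
Import GRing.Theory.
Local Open Scope ring_scope.


Lemma F2_cases (x : 'F_2) : x = 0 \/ x = 1.
Proof. case: x => [[|[|m]] H] /=; [left|right|]; try by apply/val_inj. by []. Qed.
Lemma F2_2 : 2 \in [pchar 'F_2]. Proof. exact: pchar_Fp. Qed.
Lemma F2_addrr (x : 'F_2) : x + x = 0. Proof. by case: (F2_cases x) => ->; rewrite ?addr0 //; apply/val_inj. Qed.
Lemma F2_sq (x : 'F_2) : x * x = x.
Proof. by case: (F2_cases x) => ->; rewrite ?mul0r ?mul1r. Qed.
Lemma F2_neq0 (x : 'F_2) : x != 0 -> x = 1.
Proof. by case: (F2_cases x) => ->; rewrite ?eqxx. Qed.

Definition Ff {k} (a b : 'rV['F_2]_k) (v : 'cV['F_2]_k) : 'F_2 :=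
  (a *m v) 0 0 * (b *m v) 0 0.

Lemma Ff0 k (a b : 'rV['F_2]_k) : Ff a b 0 = 0.
Proof. by rewrite /Ff !mulmx0 !mxE mul0r. Qed.

Lemma sum_subspace k (a b : 'rV['F_2]_k) (U : {vspace 'cV['F_2]_k}) :
  (3 <= \dim U)%N -> \sum_(v | v \in U) Ff a b v = 0.
Proof.
move=> hU.
pose f := linfun (mulmx (col_mx a b) : 'cV['F_2]_k -> 'cV['F_2]_(1 + 1)).
have := limg_ker_dim f U.
have : (\dim (f @: U) <= 2)%N.
  by apply: leq_trans (dimvS (subvf _)) _; rewrite dimvf dim_matrix.
move=> h1 h2.
have hK : (U :&: lker f)%VS != 0%VS.
  rewrite -dimv_eq0; move: hU; rewrite -h2 => h; apply/eqP => e; move: h; rewrite e add0n ltnNge (leq_trans h1) ?leqnSn //.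
set w := vpick (U :&: lker f).
have wU : w \in (U :&: lker f)%VS by exact: memv_pick.
have wnz : w != 0 by rewrite vpick0.
move: wU; rewrite memv_cap memv_ker lfunE /= mul_col_mx col_mx_eq0 => /andP[wU /andP[/eqP aw /eqP bw]].
have [i wi] : exists i, w i 0 != 0.
  apply/existsP; move: wnz; apply: contraR; rewrite negb_exists => /forallP H.
  apply/eqP/matrixP => p q; rewrite ord1 mxE; exact/eqP/negPn/H.
have wi1 := F2_neq0 _ wi.
rewrite (bigID (fun v : 'cV['F_2]_k => v i 0 == 0)) /=.
rewrite [X in _ + X](reindex_inj (addIr w)) /=.
rewrite [X in _ + X](eq_big (fun v => (v \in U) && (v i 0 == 0)) (Ff a b)) ?F2_addrr //.
  move=> v; rewrite rpredDr // mxE wi1; congr andb.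
  by case: (F2_cases (v i 0)) => ->.
move=> v _; rewrite /Ff !mulmxDr aw bw !addr0 //.
Qed.


Lemma so_cols k n (G : 'M['F_2]_(k, n)) (a b : 'rV['F_2]_k) :
  self_orthogonal G -> \sum_(j < n) Ff a b (col j G) = 0.
Proof.
move=> hso.
have := hso (b *m G) (submxMl _ _) (a *m G) (submxMl _ _).
move/matrixP => /(_ 0 0); rewrite !mxE => e; apply: etrans e.
apply: eq_bigr => j _; rewrite /Ff !mxE.
by congr (_ * _); apply: eq_bigr => i _; rewrite !mxE.
Qed.

Lemma cols_mult k n (G : 'M['F_2]_(k, n)) (F : 'cV['F_2]_k -> 'F_2) :
  \sum_(j < n) F (col j G) = \sum_v (col_mult G v)%:R * F v.
Proof.
rewrite (partition_big (fun j => col j G) xpredT) //=.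
apply: eq_bigr => v _.
rewrite (eq_bigr (fun _ => F v)); last by move=> j /eqP ->.
rewrite (eq_bigl (fun j => j \in [set j | col j G == v])); last by move=> j; rewrite inE.
by rewrite sumr_const mulr_natl.
Qed.

Lemma sum_if k (U : {pred 'cV['F_2]_k}) (F : 'cV['F_2]_k -> 'F_2) :
  \sum_v (if v \in U then F v else 0) = \sum_(v in U) F v.
Proof. by rewrite [RHS]big_mkcond. Qed.

Lemma key k s t (V : 'I_t -> {vspace 'cV['F_2]_k}) (W : {vspace 'cV['F_2]_k})
    (T : {set 'cV['F_2]_k}) (R : option 'cV['F_2]_k) n (G : 'M['F_2]_(k, n))
    (a b : 'rV['F_2]_k) :
  (3 <= k)%N -> (forall i, 3 <= \dim (V i))%N -> (3 <= \dim W)%N ->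
  T \subset [set x | (x \in W) && (x != 0)] ->
  (forall v : 'cV['F_2]_k, v != 0 -> (belov_removed_mult V W T R v <= s)%N) ->
  (forall v : 'cV['F_2]_k,
      col_mult G v = if v == 0 then 0%N else (s - belov_removed_mult V W T R v)%N) ->
  self_orthogonal G ->
  \sum_(x in T) Ff a b x = (if R is Some r then Ff a b r else 0).
Proof.
move=> hk hV hW hT hm hcol hso.
have h0 := so_cols _ _ G a b hso; rewrite (cols_mult _ _ G (Ff a b)) in h0.
set m := belov_removed_mult V W T R in hm hcol.
have e v : (col_mult G v)%:R * Ff a b v = s%:R * Ff a b v - (m v)%:R * Ff a b v.
  rewrite hcol; case: eqP => [->|/eqP nz]; first by rewrite Ff0 !mulr0 subr0.
  by rewrite natrB ?hm // mulrBl.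
rewrite (eq_bigr _ (fun v _ => e v)) sumrB -mulr_sumr in h0.
have hfull : \sum_v Ff a b v = 0.
  rewrite -[RHS](@sum_subspace k a b fullv); last by rewrite dimvf dim_matrix mulr1.
  by apply: eq_bigl => v; rewrite memvf.
move: h0; rewrite hfull mulr0 sub0r => /eqP; rewrite oppr_eq0 => /eqP h0.
have hm' v : (m v)%:R * Ff a b v =
   \sum_i (if v \in V i then Ff a b v else 0) +
   ((if v \in W then Ff a b v else 0) - (if v \in T then Ff a b v else 0)) +
   (if R == Some v then Ff a b v else 0).
  rewrite /m /belov_removed_mult !natrD natr_sum !mulrDl mulr_suml; congr (_ + _ + _).
  - apply: eq_bigr => i _; case: (v \in V i); case: eqP => [->|_];
      by rewrite /= ?Ff0 ?mul0r ?mul1r.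
  - case vT: (v \in T).
      have := subsetP hT v vT; rewrite inE => /andP[-> ->] /=.
      by rewrite mul0r subrr.
    by case: (v \in W); case: eqP => [->|_]; rewrite /= ?Ff0 ?mul0r ?mul1r ?subr0.
  - by case: (R == Some v); rewrite /= ?mul0r ?mul1r.
rewrite (eq_bigr _ (fun v _ => hm' v)) !big_split /= sumrN exchange_big /= in h0.
rewrite big1 ?add0r in h0; last first.
  by move=> i _; rewrite sum_if; apply: sum_subspace.
rewrite !sum_if sum_subspace // sub0r in h0.
move: h0; set X := (X in _ + X = 0).
have -> : X = (if R is Some r then Ff a b r else 0).
  rewrite /X; clear X e hm' hm hcol m hT; case: R => [r|].
    by rewrite (big_pred1 r) // => v; rewrite unfold_in /= eq_sym.
  by rewrite big_pred0.
by rewrite addrC => /eqP; rewrite subr_eq0 => /eqP.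
Qed.


Lemma coord_row k N (X : N.-tuple 'cV['F_2]_k) j (x : 'cV['F_2]_k) :
  ((\row_l coord X j (delta_mx l 0)) *m x) 0 0 = coord X j x.
Proof.
rewrite mxE {2}(matrix_sum_delta x) linear_sum /=.
apply: eq_bigr => l _; rewrite big_ord1 linearZ /= mxE mulrC.
by have -> : (0 : 'I_1) = ord0 by apply: val_inj.
Qed.

Lemma row_delta k (i : 'I_k) (x : 'cV['F_2]_k) : ((delta_mx 0 i : 'rV['F_2]_k) *m x) 0 0 = x i 0.
Proof. by rewrite -rowE mxE. Qed.

Lemma none_case k u (T : {set 'cV['F_2]_k}) :
  (1 <= u)%N -> #|T| = u.+2 -> \dim <<enum T>>%VS = u.+1 -> \sum_(x in T) x = 0 ->
  exists a b : 'rV['F_2]_k, \sum_(x in T) Ff a b x != 0.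
Proof.
move=> hu hc hd hs.
have hsz : size (enum T) = u.+2 by rewrite -cardE.
case E: (enum T) hsz => [|t0 rest] //= /eqP; rewrite eqSS => /eqP hN.
move: hs; rewrite -big_enum E big_cons => /eqP; rewrite addr_eq0 => /eqP ht0.
have t0in : t0 \in <<rest>>%VS.
  by rewrite ht0 rpredN big_seq; apply: memv_suml => x xr; apply: memv_span.
have hdr : \dim <<rest>>%VS = u.+1.
  by rewrite -hd E span_cons; congr (\dim _); apply/esym/addv_idPr.
have fr : free rest by rewrite /free hdr hN.
set rt := in_tuple rest.
have lt0 : (0 < size rest)%N by rewrite hN.
have lt1 : (1 < size rest)%N by rewrite hN.
pose i0 := Ordinal lt0. pose i1 := Ordinal lt1.
exists (\row_l coord rt i0 (delta_mx l 0)), (\row_l coord rt i1 (delta_mx l 0)).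
rewrite -big_enum E big_cons /Ff !coord_row.
have hc0 (j l : 'I_(size rest)) : coord rt j (rest`_l) = (l == j)%:R.
  by rewrite coord_free.
rewrite big_seq big1 ?addr0; last first.
  move=> x xr; have [l hl] : exists l : 'I_(size rest), x = rest`_l.
    have hx : (index x rest < size rest)%N by rewrite index_mem.
    by exists (Ordinal hx); rewrite nth_index.
  rewrite hl !coord_row !hc0; case: (l =P i0) => [->|_]; last by rewrite mul0r.
  by rewrite /= mulr0.
have hsum j : coord rt j t0 = -1.
  rewrite ht0 linearN /= (big_nth 0) big_mkord linear_sum /=.
  rewrite (bigD1 j) //= hc0 eqxx big1 ?addr0 // => l /negbTE.
  by rewrite hc0 => ->.
by rewrite !hsum mulrNN mulr1.
Qed.

Theorem theorem4p2
  (k s t u : nat) (u_ : 'I_t -> nat)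
  (V : 'I_t -> {vspace 'cV['F_2]_k}) (W : {vspace 'cV['F_2]_k})
  (T : {set 'cV['F_2]_k}) (R : option 'cV['F_2]_k)
  (n : nat) (G : 'M['F_2]_(k, n)) :
  (1 <= s)%N ->
  (* u_1 > u_2 > ... > u_t > u >= 3 *)
  (forall i j : 'I_t, (i < j)%N -> (u_ j < u_ i)%N) ->
  (forall i : 'I_t, (u < u_ i)%N) ->
  (3 <= u)%N ->
  (* k > u_1 (if t > 0), k >= u + 1 (if t = 0) *)
  (forall i : 'I_t, (u_ i < k)%N) ->
  (u.+1 <= k)%N ->
  (* subspaces *)
  (forall i : 'I_t, \dim (V i) = u_ i) ->
  \dim W = u.+1 ->
  (* T: u+2 vectors of W^*, spanning a space of dimension u+1, summing to 0 *)
  T \subset [set x | (x \in W) && (x != 0)] ->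
  #|T| = u.+2 ->
  \dim <<enum T>>%VS = u.+1 ->
  \sum_(x in T) x = 0 ->
  (* R empty or a single nonzero vector *)
  R != Some 0 ->
  (* every nonzero vector occurs at most s times among the columns of G' *)
  (forall v : 'cV['F_2]_k, v != 0 -> (belov_removed_mult V W T R v <= s)%N) ->
  (* G = s S_k with the columns of G' deleted (up to column order) *)
  (forall v : 'cV['F_2]_k,
      col_mult G v = if v == 0 then 0%N else (s - belov_removed_mult V W T R v)%N) ->
  \rank G = k ->
  ~ self_orthogonal G.
Proof.
move=> hs hdec hu hu3 huk hk hV hW hT hcT hdT hsT hR hm hcol hrk hso.
have k3 : (3 <= k)%N by lia.
have hV3 i : (3 <= \dim (V i))%N by rewrite hV; have := hu i; lia.
have hW3 : (3 <= \dim W)%N by rewrite hW; lia.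
have K a b := key _ _ _ V W T R _ G a b k3 hV3 hW3 hT hm hcol hso.
move: K; case: R hR {hm hcol} => [r|] hR K.
  have rnz : r != 0 by apply: contraNneq hR => ->.
  have [i ri] : exists i, r i 0 != 0.
    apply/existsP; move: rnz; apply: contraR; rewrite negb_exists => /forallP H.
    apply/eqP/matrixP => p q; rewrite ord1 mxE; exact/eqP/negPn/H.
  have := K (delta_mx 0 i) (delta_mx 0 i).
  rewrite /Ff row_delta F2_sq (eq_bigr (fun x : 'cV['F_2]_k => x i 0)); last first.
    by move=> x _; rewrite row_delta F2_sq.
  rewrite -summxE hsT mxE => /esym/eqP; by rewrite (negbTE ri).
have hu1 : (1 <= u)%N by lia.
have [a [b hab]] := none_case _ _ T hu1 hcT hdT hsT.
by rewrite (K a b) eqxx in hab.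
Qed.
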